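(* Let $l,m\in\mathbb{N}$. If $q(x)=x^6-(l+m+3)x^4+(lm+l+m+3)x^2-1$ is irreducible over $\mathbb{Q}$, then the set of all positive eigenvalues (respectively, all negative eigenvalues) of the adjacency matrix of the double subdivided star $T_{l,m}$ is linearly independent over $\mathbb{Q}$.
   Context: A subdivided star $SK_{1,l}$ is obtained by identifying exactly one pendant (end) vertex from each of $l$ copies of the path $P_3$; the identified vertex is the coalescence vertex. The double subdivided star $T_{l,m}$ is obtained from $SK_{1,l}$ and $SK_{1,m}$ by adding one edge joining their two coalescence vertices. Its characteristic polynomial is $(x^2-1)^{l+m-2}q(x)$. *)

(* Defs.v *)
From HB Require Import structures.
From mathcomp Require Import all_boot all_order all_algebra all_field.
Set Implicit Arguments. Unset Strict Implicit. Unset Printing Implicit Defensive.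
Import Order.TTheory GRing.Theory Num.Theory.
Local Open Scope ring_scope.

(* Vertex labelling of the double subdivided star T_{l,m} on 'I_(2 + 2l + 2m):
   0 = coalescence vertex of SK_{1,l}, 1 = coalescence vertex of SK_{1,m};
   for i < l : 2+2i is the middle vertex and 3+2i the pendant vertex of the
   i-th P_3 of SK_{1,l};
   for j < m : 2+2l+2j is the middle vertex and 3+2l+2j the pendant vertex of
   the j-th P_3 of SK_{1,m}.
   tedge lists each edge once (oriented); adjacency is its symmetrisation. *)
Definition tedge (l m u v : nat) : bool :=
  [|| (u == 0%N) && (v == 1%N),
      [&& u == 0%N, (2 <= v < 2 + 2 * l)%N & ~~ odd v],
      [&& (2 <= u < 2 + 2 * l)%N, ~~ odd u & v == u.+1],
      [&& u == 1%N, (2 + 2 * l <= v < 2 + 2 * l + 2 * m)%N & ~~ odd v]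
    | [&& (2 + 2 * l <= u < 2 + 2 * l + 2 * m)%N, ~~ odd u & v == u.+1]].

Definition adjT (l m : nat) : 'M[algC]_(2 + 2 * l + 2 * m) :=
  \matrix_(i, j) ((tedge l m i j || tedge l m j i)%:R).

Definition qT (l m : nat) : {poly rat} :=
  'X^6 - (l + m + 3)%:R *: 'X^4 + (l * m + l + m + 3)%:R *: 'X^2 - 1.

Definition Qlin_indep (S : pred algC) : Prop :=
  forall (s : seq algC) (c : algC -> rat),
    uniq s -> all S s -> \sum_(x <- s) ratr (c x) * x = 0 ->
    forall x, x \in s -> c x = 0.

(* Main.v *)
Require Import Defs.
From HB Require Import structures.
From mathcomp Require Import all_boot all_order all_algebra all_field.
From mathcomp Require Import ring zify.
Import Order.TTheory GRing.Theory Num.Theory.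
Local Open Scope ring_scope.
Set Implicit Arguments. Unset Strict Implicit. Unset Printing Implicit Defensive.

Lemma irr_sep (q : {poly rat}) : irreducible_poly q -> separable_poly q.
Proof.
move=> [sq irr]; rewrite unlock /coprimep.
apply: contraT => hg.
have /irr := dvdp_gcdl q q^`() => /(_ hg) e.
have dq : q %| q^`() by rewrite -(eqp_dvdl _ e) dvdp_gcdr.
have q0 : q != 0 by rewrite -size_poly_gt0; apply: ltn_trans sq.
have d0 : q^`() != 0.
  apply/eqP => h; have := congr1 (fun p : {poly rat} => p`_(size q).-2) h; rewrite /= coef_deriv coef0.
  have -> : (size q).-2.+1 = (size q).-1 by case: (size q) sq => [|[|n]].
  move/eqP; rewrite mulrn_eq0 -lead_coefE lead_coef_eq0 (negbTE q0) orbF.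
  by case: (size q) sq => [|[|n]].
by have := dvdp_leq d0 dq; rewrite leqNgt lt_size_deriv.
Qed.

Lemma irr_noroot (q : {poly rat}) (r : rat) :
  irreducible_poly q -> (2 < size q)%N -> ~~ root q r.
Proof.
move=> [_ irr] sq; rewrite root_factor_theorem; apply/negP => /irr.
rewrite size_XsubC => /(_ isT) /eqp_size; rewrite size_XsubC => e.
by move: sq; rewrite -e.
Qed.

Definition SFT (L : fieldExtType rat) (ax : splitting_field_axiom L) : Type := L.
HB.instance Definition _ (L : fieldExtType rat) (ax : splitting_field_axiom L) :=
  FieldExt.on (SFT ax).
HB.instance Definition _ (L : fieldExtType rat) (ax : splitting_field_axiom L) :=
  FieldExt_isSplittingField.Build rat (SFT ax) ax.
Lemma galMf (L : splittingFieldType rat) (g h : gal_of {:L}) a : (g * h)%g a = h (g a).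
Proof. exact: galM (memvf a). Qed.

Lemma galVK (L : splittingFieldType rat) (g : gal_of {:L}) a : g ((g^-1)%g a) = a.
Proof. by rewrite -galMf mulVg gal_id. Qed.

Lemma galKV (L : splittingFieldType rat) (g : gal_of {:L}) a : (g^-1)%g (g a) = a.
Proof. by rewrite -galMf mulgV gal_id. Qed.

Lemma gal_pm1 (L : splittingFieldType rat) (g : gal_of {:L}) (p : L) :
  p ^+ 2 = 1 -> g p = p.
Proof.
move/eqP; rewrite sqrf_eq1 => /orP[] /eqP ->; first exact: rmorph1.
by rewrite linearN rmorph1.
Qed.

Lemma finish_flip (L : splittingFieldType rat) (b1 b2 b3 : L) (n : gal_of {:L}) :
  (b1 * b2 * b3) ^+ 2 = 1 -> n b1 = - b1 ->
  (n b2 = b2 \/ n b2 = - b2) -> (n b3 = b3 \/ n b3 = - b3) ->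
  (n b2 = - b2 /\ n b3 = b3) \/ (n b2 = b2 /\ n b3 = - b3).
Proof.
move=> Hp n1 H2 H3.
have np := gal_pm1 n Hp.
have p0 : b1 * b2 * b3 != 0.
  by apply/eqP => h; move: Hp; rewrite h expr0n /= => /eqP; rewrite eq_sym oner_eq0.
rewrite !rmorphM /= n1 in np.
case: H2 => h2; case: H3 => h3; rewrite ?h2 ?h3 in np; try by [left|right].
- move: np; rewrite !mulNr => /eqP; rewrite eq_sym -subr_eq0 opprK -mulr2n -scaler_nat.
  by rewrite scaler_eq0 pnatr_eq0 /= (negbTE p0).
- move: np; rewrite mulrN mulNr mulrN opprK => /eqP; rewrite eq_sym -subr_eq0 opprK -mulr2n -scaler_nat.
  by rewrite scaler_eq0 pnatr_eq0 /= (negbTE p0).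
Qed.

Lemma in6 (T : eqType) (x a1 a2 a3 a4 a5 a6 : T) :
  x \in [:: a1; a2; a3; a4; a5; a6] ->
  x = a1 \/ x = a2 \/ x = a3 \/ x = a4 \/ x = a5 \/ x = a6.
Proof.
rewrite !inE => /orP[/eqP->|/orP[/eqP->|/orP[/eqP->|/orP[/eqP->|/orP[/eqP->|/eqP->]]]]].
all: tauto.
Qed.

Lemma key_flip (L : splittingFieldType rat) (b1 b2 b3 : L) :
  (forall (g : gal_of {:L}) x, x \in [:: b1; -b1; b2; -b2; b3; -b3] ->
       g x \in [:: b1; -b1; b2; -b2; b3; -b3]) ->
  (forall x y, x \in [:: b1; -b1; b2; -b2; b3; -b3] ->
       y \in [:: b1; -b1; b2; -b2; b3; -b3] -> exists g : gal_of {:L}, g x = y) ->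
  uniq [:: b1; -b1; b2; -b2; b3; -b3] -> (b1 * b2 * b3) ^+ 2 = 1 ->
  exists n : gal_of {:L}, n b1 = - b1 /\
    ((n b2 = - b2 /\ n b3 = b3) \/ (n b2 = b2 /\ n b3 = - b3)).
Proof.
move=> HR Hex Hu Hp.
have inR : forall x, x \in [:: b1; -b1; b2; -b2; b3; -b3] =
   [|| x == b1, x == -b1, x == b2, x == -b2, x == b3 | x == -b3].
  by move=> x; rewrite !inE.
move: Hu; rewrite /= !inE !negb_or -!andbA => /andP[e11 /andP[e12 /andP[e12' /andP[e13 /andP[e13' /andP[e1'2 /andP[e1'2' /andP[e1'3 /andP[e1'3' /andP[e22 /andP[e23 /andP[e23' /andP[e2'3 /andP[e2'3' /andP[e33 _]]]]]]]]]]]]]]].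
have neq0 : forall b : L, b != - b -> b != 0.
  by move=> b; apply: contra => /eqP ->; rewrite oppr0.
have nz1 := neq0 _ e11; have nz2 := neq0 _ e22; have nz3 := neq0 _ e33.
have gN : forall (g : gal_of {:L}) x, g (- x) = - g x by move=> g x; rewrite linearN.
have gP : forall g : gal_of {:L}, g b1 * g b2 * g b3 = b1 * b2 * b3.
  by move=> g; rewrite -!rmorphM; apply: gal_pm1.
have fin : forall n : gal_of {:L}, n b1 = - b1 ->
  (n b2 = b2 \/ n b2 = - b2) -> (n b3 = b3 \/ n b3 = - b3) ->
  exists n : gal_of {:L}, n b1 = - b1 /\
    ((n b2 = - b2 /\ n b3 = b3) \/ (n b2 = b2 /\ n b3 = - b3)).
  by move=> n h1 h2 h3; exists n; split => //; exact: finish_flip Hp h1 h2 h3.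
have conjs : forall rho : gal_of {:L}, rho b1 = b1 -> rho b2 = - b2 -> rho b3 = - b3 ->
  exists n : gal_of {:L}, n b1 = - b1 /\
    ((n b2 = - b2 /\ n b3 = b3) \/ (n b2 = b2 /\ n b3 = - b3)).
  move=> rho r1 r2 r3.
  have rR : forall x, x \in [:: b1; -b1; b2; -b2; b3; -b3] -> rho x = x \/ rho x = - x.
    move=> x /in6 [->|[->|[->|[->|[->|->]]]]]; rewrite ?gN ?r1 ?r2 ?r3 ?opprK; by [left|right].
  have [s sb2] : exists s : gal_of {:L}, s b2 = b1 by apply: Hex; rewrite !inE eqxx ?orbT.
  set n := ((s^-1) * rho * s)%g.
  have nE : forall a, n a = s (rho ((s^-1)%g a)) by move=> a; rewrite /n !galMf.
  have sV1 : (s^-1)%g b1 = b2 by rewrite -sb2 galKV.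
  have pm : forall x, x \in [:: b2; b3] -> n x = x \/ n x = - x.
    move=> x hx.
    have : (s^-1)%g x \in [:: b1; -b1; b2; -b2; b3; -b3].
      by apply: HR; move: hx; rewrite !inE => /orP[] ->; rewrite ?orbT.
    move/rR => [] h; rewrite nE h ?gN galVK; by [left|right].
  apply: (fin n); first by rewrite nE sV1 r2 gN sb2.
    by apply: pm; rewrite !inE eqxx.
  by apply: pm; rewrite !inE eqxx orbT.
have [t t1] : exists t : gal_of {:L}, t b1 = - b1 by apply: Hex; rewrite !inE eqxx ?orbT.
have T : t b2 * t b3 = - (b2 * b3).
  apply: (mulfI nz1); have := gP t; rewrite t1 !mulNr -!mulrA => e.
  by rewrite mulrN -e opprK.
have : t b2 \in [:: b1; -b1; b2; -b2; b3; -b3] by apply: HR; rewrite !inE eqxx ?orbT.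
move=> /in6 [h|[h|[h|[h|[h|h]]]]].
- have : t b2 = t (- b1) by rewrite gN t1 opprK.
  by move/fmorph_inj => e; move: e12'; rewrite e opprK eqxx.
- have : t b2 = t b1 by rewrite t1.
  by move/fmorph_inj => e; move: e12; rewrite e eqxx.
- apply: (fin t) => //; first by left.
  right; apply: (mulfI nz2); move: T; rewrite h => ->; by rewrite mulrN.
- apply: (fin t) => //; first by right.
  left; apply: (mulfI nz2); by move: T; rewrite h mulNr => /oppr_inj.
- have tb3 : t b3 = - b2.
    apply: (mulfI nz3); move: T; rewrite h => ->; by rewrite mulrN (mulrC b3).
  apply: (conjs (t * t)%g).
  + by rewrite !galMf t1 gN t1 opprK.
  + by rewrite !galMf h tb3.
  + by rewrite !galMf tb3 gN h.
- have tb3 : t b3 = b2.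
    apply: (mulfI nz3); move: T; rewrite h mulNr => /oppr_inj ->; by rewrite mulrC.
  apply: (conjs (t * t)%g).
  + by rewrite !galMf t1 gN t1 opprK.
  + by rewrite !galMf h gN tb3.
  + by rewrite !galMf tb3 h.
Qed.

Lemma kill (L : splittingFieldType rat) (n : gal_of {:L}) (x y z : L) (c0 cx cy cz : rat) :
  n x = - x -> n y = - y -> n z = z -> (forall r : rat, z != r%:A) ->
  c0%:A + cx *: x + cy *: y + cz *: z = 0 -> c0 = 0 /\ cz = 0.
Proof.
move=> nx ny nz zr E.
have E' : c0%:A - cx *: x - cy *: y + cz *: z = 0.
  have := congr1 n E; rewrite !linearD !linearZ /= rmorph1 linear0 nx ny nz.
  by rewrite !scalerN.
have E2 : (c0%:A + cz *: z) *+ 2 = 0.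
  have -> : (c0%:A + cz *: z) *+ 2 = (c0%:A + cx *: x + cy *: y + cz *: z) +
     (c0%:A - cx *: x - cy *: y + cz *: z) by rewrite mulr2n; ring.
  by rewrite E E' addr0.
have E3 : c0%:A + cz *: z = 0.
  by move: E2; rewrite -scaler_nat => /eqP; rewrite scaler_eq0 pnatr_eq0 /= => /eqP.
have cz0 : cz = 0.
  apply/eqP; apply: contraT => hz; move: (zr (- c0 / cz)).
  rewrite -[z](scalerK hz) -[_ *: z](addKr (c0%:A)) E3 addr0.
  by rewrite -scaleNr scalerA mulrC eqxx.
split => //; move: E3; rewrite cz0 scale0r addr0 => /eqP.
by rewrite scaler_eq0 oner_eq0 orbF => /eqP.
Qed.

Lemma lin_L (L : splittingFieldType rat) (b1 b2 b3 : L) (c0 c1 c2 c3 : rat) :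
  (forall (g : gal_of {:L}) x, x \in [:: b1; -b1; b2; -b2; b3; -b3] ->
       g x \in [:: b1; -b1; b2; -b2; b3; -b3]) ->
  (forall x y, x \in [:: b1; -b1; b2; -b2; b3; -b3] ->
       y \in [:: b1; -b1; b2; -b2; b3; -b3] -> exists g : gal_of {:L}, g x = y) ->
  uniq [:: b1; -b1; b2; -b2; b3; -b3] -> (b1 * b2 * b3) ^+ 2 = 1 ->
  (forall r : rat, [/\ b1 != r%:A, b2 != r%:A & b3 != r%:A]) ->
  c0%:A + c1 *: b1 + c2 *: b2 + c3 *: b3 = 0 ->
  [/\ c0 = 0, c1 = 0, c2 = 0 & c3 = 0].
Proof.
move=> HR Hex Hu Hp Hr E.
set R := [:: b1; -b1; b2; -b2; b3; -b3].
have P2 : perm_eq [:: b2; -b2; b3; -b3; b1; -b1] R.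
  have := perm_catC [:: b1; -b1] [:: b2; -b2; b3; -b3] ([:: b2; -b2; b3; -b3] ++ [:: b1; -b1]).
  by rewrite perm_refl perm_sym.
have P3 : perm_eq [:: b3; -b3; b1; -b1; b2; -b2] R.
  have := perm_catC [:: b1; -b1; b2; -b2] [:: b3; -b3] ([:: b3; -b3] ++ [:: b1; -b1; b2; -b2]).
  by rewrite perm_refl perm_sym.
have r1 : forall r : rat, b1 != r%:A by move=> r; case: (Hr r).
have r2 : forall r : rat, b2 != r%:A by move=> r; case: (Hr r).
have r3 : forall r : rat, b3 != r%:A by move=> r; case: (Hr r).
have nz : forall b : L, (forall r : rat, b != r%:A) -> b != 0.
  by move=> b h; have := h 0; rewrite scale0r.
have sc0 : forall (c : rat) (b : L), (forall r : rat, b != r%:A) -> c *: b = 0 -> c = 0.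
  by move=> c b h /eqP; rewrite scaler_eq0 (negbTE (nz b h)) orbF => /eqP.
have fin : c0 = 0 -> (c1 = 0 /\ c2 = 0) \/ (c1 = 0 /\ c3 = 0) \/ (c2 = 0 /\ c3 = 0) ->
    [/\ c0 = 0, c1 = 0, c2 = 0 & c3 = 0].
  move=> h0 [[h1 h2]|[[h1 h3]|[h2 h3]]]; move: E; rewrite h0 ?h1 ?h2 ?h3 !scale0r !add0r ?addr0.
  - by move/(sc0 _ _ r3).
  - by move/(sc0 _ _ r2).
  - by move/(sc0 _ _ r1).
have E132 : c0%:A + c1 *: b1 + c3 *: b3 + c2 *: b2 = 0 by rewrite -E; ring.
have E231 : c0%:A + c2 *: b2 + c3 *: b3 + c1 *: b1 = 0 by rewrite -E; ring.
have HR2 : forall (g : gal_of {:L}) x, x \in [:: b2; -b2; b3; -b3; b1; -b1] ->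
       g x \in [:: b2; -b2; b3; -b3; b1; -b1].
  by move=> g x; rewrite !(perm_mem P2); exact: HR.
have HR3 : forall (g : gal_of {:L}) x, x \in [:: b3; -b3; b1; -b1; b2; -b2] ->
       g x \in [:: b3; -b3; b1; -b1; b2; -b2].
  by move=> g x; rewrite !(perm_mem P3); exact: HR.
have Hex2 : forall x y, x \in [:: b2; -b2; b3; -b3; b1; -b1] ->
       y \in [:: b2; -b2; b3; -b3; b1; -b1] -> exists g : gal_of {:L}, g x = y.
  by move=> x y; rewrite !(perm_mem P2); exact: Hex.
have Hex3 : forall x y, x \in [:: b3; -b3; b1; -b1; b2; -b2] ->
       y \in [:: b3; -b3; b1; -b1; b2; -b2] -> exists g : gal_of {:L}, g x = y.
  by move=> x y; rewrite !(perm_mem P3); exact: Hex.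
have Hu2 : uniq [:: b2; -b2; b3; -b3; b1; -b1] by rewrite (perm_uniq P2).
have Hu3 : uniq [:: b3; -b3; b1; -b1; b2; -b2] by rewrite (perm_uniq P3).
have Hp2 : (b2 * b3 * b1) ^+ 2 = 1 by rewrite -Hp; congr (_ ^+ 2); ring.
have Hp3 : (b3 * b1 * b2) ^+ 2 = 1 by rewrite -Hp; congr (_ ^+ 2); ring.
have [n2 [n21 [[n22 n23]|[n22 n23]]]] := key_flip HR2 Hex2 Hu2 Hp2;
have [n3 [n31 [[n32 n33]|[n32 n33]]]] := key_flip HR3 Hex3 Hu3 Hp3;
have [n1 [n11 [[n12 n13]|[n12 n13]]]] := key_flip HR Hex Hu Hp.
all: try (have [k0 k3] := kill n11 n12 n13 (r3) E).
all: try (have [k0' k2] := kill n11 n13 n12 (r2) E132).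
all: try (have [_ k1] := kill n21 n22 n23 (r1) E231).
all: try (have [_ k3'] := kill n23 n21 n22 (r3) E).
all: try (have [_ k2'] := kill n32 n31 n33 (r2) E132).
all: try (have [_ k1'] := kill n33 n31 n32 (r1) E231).
all: apply: fin => //; tauto.
Qed.

Lemma core_C (q : {poly rat}) (bt1 bt2 bt3 : algC) (c0 c1 c2 c3 : rat) :
  irreducible_poly q ->
  map_poly ratr q = \prod_(w <- [:: bt1; -bt1; bt2; -bt2; bt3; -bt3]) ('X - w%:P) ->
  (bt1 * bt2 * bt3) ^+ 2 = 1 ->
  ratr c0 + ratr c1 * bt1 + ratr c2 * bt2 + ratr c3 * bt3 = 0 ->
  [/\ c0 = 0, c1 = 0, c2 = 0 & c3 = 0].
Proof.
move=> irr Dq Hp E.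
have sq : size q = 7.
  by rewrite -(size_map_poly (ratr : rat -> algC) q) Dq size_prod_XsubC.
have uC : uniq [:: bt1; -bt1; bt2; -bt2; bt3; -bt3].
  by rewrite -separable_prod_XsubC -Dq separable_map irr_sep.
have [Qs [QsC [s1 Ds1 genQs]]] := num_field_exists [:: bt1; bt2; bt3].
case: s1 Ds1 genQs => [|a1 [|a2 [|a3 [|? ?]]]] //= [e1 e2 e3] genQs.
have QsCr : forall r : rat, QsC r%:A = ratr r by move=> r; rewrite alg_num_field fmorph_rat.
have mapq : map_poly QsC (map_poly (in_alg Qs) q) = map_poly ratr q.
  by rewrite -map_poly_comp; apply: eq_map_poly => r /=; rewrite QsCr.
set rs := [:: a1; -a1; a2; -a2; a3; -a3].
have Dp : map_poly (in_alg Qs) q = \prod_(w <- rs) ('X - w%:P).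
  apply: (map_poly_inj QsC); rewrite mapq Dq map_prod_XsubC /=.
  by rewrite -(big_map QsC xpredT (fun w => ('X - w%:P))) /= !rmorphN e1 e2 e3.
have ax : splitting_field_axiom Qs.
  exists (map_poly (in_alg Qs) q); first by apply/polyOver1P; exists q.
  exists rs; first by rewrite Dp eqpxx.
  apply/eqP; rewrite eqEsubv subvf /= -genQs; apply: adjoin_seqSr.
  by move=> x; rewrite !inE => /orP[->|/orP[->|->]]; rewrite ?orbT.
pose L := SFT ax.
have rootp : forall x : L, root (map_poly (in_alg L) q) x = (x \in rs).
  by move=> x; rewrite Dp root_prod_XsubC.
have gq : forall g : gal_of {:L}, map_poly g (map_poly (in_alg L) q) = map_poly (in_alg L) q.
  move=> g; rewrite -map_poly_comp; apply: eq_map_poly => r /=.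
  by rewrite linearZ rmorph1.
have rs_not : forall r : rat, [/\ a1 != r%:A, a2 != r%:A & a3 != r%:A].
  have nr : forall (a : Qs) (bt : algC), QsC a = bt -> bt \in [:: bt1; -bt1; bt2; -bt2; bt3; -bt3] ->
      forall r : rat, a != r%:A.
    move=> a bt ea hbt r; apply/eqP => h.
    have : root (map_poly ratr q) bt by rewrite Dq root_prod_XsubC.
    by rewrite -ea h QsCr fmorph_root; apply/negP; apply: irr_noroot; rewrite ?sq.
  by move=> r; split; apply: nr; rewrite ?e1 ?e2 ?e3 // !inE eqxx ?orbT.
apply: (@lin_L L a1 a2 a3) => //.
- move=> g x; rewrite -!rootp /root -{2}(gq g) horner_map /= => /eqP ->.
  by rewrite linear0.
- move=> x y hx; rewrite -rootp => ry.
  have mp : minPoly 1 x %= map_poly (in_alg L) q.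
    have [m0 Dm] := polyOver1P (minPolyOver 1 x).
    have dv : m0 %| q.
      rewrite -(dvdp_map (in_alg L)) -Dm. apply: minPoly_dvdp.
        by apply/polyOverP => i; rewrite coef_map /= memvZ // mem1v.
      by rewrite rootp.
    have sm : size m0 != 1.
      apply/negP => /size_poly1P [c cn0 Dc].
      have := root_minPoly 1 x; rewrite Dm Dc map_polyC rootC /=.
      by rewrite scaler_eq0 oner_eq0 orbF (negbTE cn0).
    by rewrite Dm eqp_map; apply: (irr.2 _ sm dv).
  have ry' : root (minPoly 1 x) y by rewrite (eqp_root mp).
  have [g _ gx] := normalField_root_minPoly (sub1v _) (normalFieldf 1) (memvf x) ry'.
  by exists g.
- by rewrite -(map_inj_uniq (fmorph_inj QsC)) /= !rmorphN e1 e2 e3.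
- by apply: (fmorph_inj QsC); rewrite rmorphXn !rmorphM e1 e2 e3 rmorph1 Hp.
- apply: (fmorph_inj QsC); by rewrite rmorph0 !rmorphD !rmorphZ_num e1 e2 e3 rmorph1 mulr1.
Qed.
Lemma qT_factor (l m : nat) : exists b1 b2 b3 : algC,
  map_poly ratr (qT l m) = \prod_(w <- [:: b1; -b1; b2; -b2; b3; -b3]) ('X - w%:P)
  /\ (b1 * b2 * b3) ^+ 2 = 1.
Proof.
set a : algC := (l + m + 3)%:R; set b : algC := (l * m + l + m + 3)%:R.
pose rC : {poly algC} := Poly [:: -1; b; -a; 1].
have srC : size rC = 4 by rewrite /rC (PolyK (c:=0)) //= oner_neq0.
have lrC : lead_coef rC = 1 by rewrite lead_coefE srC coef_Poly.
have [rs Drs] := closed_field_poly_normal rC; rewrite lrC scale1r in Drs.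
have : size rs = 3 by have := size_prod_XsubC rs id; rewrite -Drs srC => -[].
case: rs Drs => [|y1 [|y2 [|y3 [|? ?]]]] // Drs _.
rewrite !big_cons big_nil mulr1 in Drs.
have expand : ('X - y1%:P) * (('X - y2%:P) * ('X - y3%:P)) = 'X^3 - (y1+y2+y3)%:P * 'X^2
   + (y1*y2+y1*y3+y2*y3)%:P * 'X - (y1*y2*y3)%:P.
  by rewrite !polyCD !polyCM; ring.
rewrite expand in Drs.
have c0 := congr1 (fun p : {poly algC} => p`_0) Drs.
have c1 := congr1 (fun p : {poly algC} => p`_1) Drs.
have c2 := congr1 (fun p : {poly algC} => p`_2) Drs.
rewrite /= /rC !coef_Poly /= !coefB !coefD !coefN !coefCM !coefXn !coefX !coefC /= in c0 c1 c2.
have e3 : y1 * y2 * y3 = 1 by apply: oppr_inj; rewrite c0; ring.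
have e2 : y1 * y2 + y1 * y3 + y2 * y3 = b by rewrite c1; ring.
have e1 : y1 + y2 + y3 = a by apply: oppr_inj; rewrite c2; ring.
have [s1 h1] : exists s, s ^+ 2 = y1 := ex_intro _ _ (sqrtCK y1).
have [s2 h2] : exists s, s ^+ 2 = y2 := ex_intro _ _ (sqrtCK y2).
have [s3 h3] : exists s, s ^+ 2 = y3 := ex_intro _ _ (sqrtCK y3).
exists s1, s2, s3.
split; last by rewrite !exprMn h1 h2 h3.
have -> : map_poly ratr (qT l m) = 'X^6 - a *: 'X^4 + b *: 'X^2 - 1.
  have mq : forall c d : rat, map_poly ratr ('X^6 - c *: 'X^4 + d *: 'X^2 - 1 : {poly rat})
     = 'X^6 - (ratr c : algC) *: 'X^4 + ratr d *: 'X^2 - 1.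
    by move=> c d; rewrite !(rmorphB, rmorphD) /= !map_polyZ !map_polyXn rmorph1.
  by rewrite /qT mq !ratr_nat.
rewrite -e1 -e2 -[X in _ - X = _]polyC1 -e3 -h1 -h2 -h3 !big_cons big_nil mulr1.
rewrite -!mul_polyC !polyCD !polyCM !polyCN ?polyC_exp; ring.
Qed.

Lemma sum_sub (s t : seq algC) (F : algC -> algC) :
  uniq s -> uniq t -> {subset s <= t} ->
  \sum_(x <- s) F x = \sum_(x <- t) (if x \in s then F x else 0).
Proof.
move=> us ut st; rewrite -big_mkcond -big_filter; apply: perm_big.
apply: uniq_perm => //; first by rewrite filter_uniq.
move=> x; rewrite mem_filter; case: (boolP (x \in s)) => //= /st ->.
by [].
Qed.

Lemma pairP (b b' : algC) : b' = b \/ b' = - b ->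
  ('X - b'%:P) * ('X - (- b')%:P) = ('X - b%:P) * ('X - (- b)%:P).
Proof. by case=> ->; rewrite // opprK mulrC. Qed.

Lemma indep_pos (q : {poly rat}) (b1 b2 b3 : algC) (s : seq algC) (c : algC -> rat) :
  irreducible_poly q ->
  map_poly ratr q = \prod_(w <- [:: b1; -b1; b2; -b2; b3; -b3]) ('X - w%:P) ->
  (b1 * b2 * b3) ^+ 2 = 1 ->
  uniq s -> (forall x, x \in s -> 0 < x /\ (x ^+ 2 = 1 \/ root (map_poly ratr q) x)) ->
  \sum_(x <- s) ratr (c x) * x = 0 -> forall x, x \in s -> c x = 0.
Proof.
move=> irr Dq Hp us Hs E.
have sq : size q = 7.
  by rewrite -(size_map_poly (ratr : rat -> algC) q) Dq size_prod_XsubC.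
pose ch (b : algC) := if - b \in s then - b else b.
have chP : forall b, ch b = b \/ ch b = - b by move=> b; rewrite /ch; case: ifP; [right|left].
have Dq' : map_poly ratr q =
    \prod_(w <- [:: ch b1; - ch b1; ch b2; - ch b2; ch b3; - ch b3]) ('X - w%:P).
  have grp : forall a b c d e f : {poly algC},
      a * (b * (c * (d * (e * f)))) = (a * b) * (c * d) * (e * f) by move=> *; ring.
  rewrite Dq !big_cons big_nil !mulr1 !grp.
  by rewrite (pairP (chP b1)) (pairP (chP b2)) (pairP (chP b3)).
have Hp' : (ch b1 * ch b2 * ch b3) ^+ 2 = 1.
  rewrite -Hp !exprMn.
  by case: (chP b1) => ->; case: (chP b2) => ->; case: (chP b3) => ->; rewrite ?sqrrN.
have u' : uniq [:: ch b1; - ch b1; ch b2; - ch b2; ch b3; - ch b3].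
  by rewrite -separable_prod_XsubC -Dq' separable_map irr_sep.
have rootE : forall x, root (map_poly ratr q) x = (x \in [:: b1; -b1; b2; -b2; b3; -b3]).
  by move=> x; rewrite Dq root_prod_XsubC.
have n1 : forall x, x \in [:: ch b1; ch b2; ch b3] -> x != 1.
  move=> x hx; apply/eqP => x1.
  have : root (map_poly ratr q) x.
    rewrite Dq' root_prod_XsubC; move: hx; rewrite !inE.
    by case/orP=> [->|/orP[]->]; rewrite ?orbT.
  by rewrite x1 -(rmorph1 ratr) fmorph_root; apply/negP; apply: (irr_noroot _ irr); rewrite sq.
have ut : uniq [:: 1; ch b1; ch b2; ch b3].
  rewrite /= !inE !negb_or.
  have /= := n1 (ch b1); rewrite !inE eqxx => /(_ isT); rewrite eq_sym => ->.
  have /= := n1 (ch b2); rewrite !inE eqxx orbT => /(_ isT); rewrite eq_sym => ->.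
  have /= := n1 (ch b3); rewrite !inE eqxx !orbT => /(_ isT); rewrite eq_sym => ->.
  move: u'; rewrite /= !inE !negb_or.
  by case/and5P => /and5P[_ -> _ -> _] _ /and3P[_ -> _] _ _.
have st : forall x, x \in s -> x \in [:: 1; ch b1; ch b2; ch b3].
  move=> x xs; have [xp [x1|]] := Hs x xs.
    move/eqP: x1; rewrite sqrf_eq1 => /orP[/eqP->|/eqP xm]; first by rewrite inE eqxx.
    by move: xp; rewrite xm oppr_gt0 ltr10.
  have chx : forall b, x = b \/ x = - b -> ch b = x.
    move=> b [] ex; rewrite /ch.
      case: ifP => [/Hs [] + _|_]; last by rewrite ex.
      rewrite -ex oppr_gt0 => /(lt_trans xp); by rewrite ltxx.
    by rewrite -ex xs.
  rewrite rootE !inE => /orP[/eqP/(@or_introl _ (x = - b1))/chx <-|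
                         /orP[/eqP/(@or_intror (x = b1) _)/chx <-|
                         /orP[/eqP/(@or_introl _ (x = - b2))/chx <-|
                         /orP[/eqP/(@or_intror (x = b2) _)/chx <-|
                         /orP[/eqP/(@or_introl _ (x = - b3))/chx <-|
                              /eqP/(@or_intror (x = b3) _)/chx <-]]]]]; by rewrite eqxx ?orbT.
pose c' x := if x \in s then c x else 0.
have E' : ratr (c' 1) + ratr (c' (ch b1)) * ch b1 + ratr (c' (ch b2)) * ch b2
          + ratr (c' (ch b3)) * ch b3 = 0.
  rewrite -E (sum_sub _ us ut st) !big_cons big_nil addr0 mulr1 !addrA.
  by rewrite /c'; do 4! (case: ifP => _; rewrite ?rmorph0 ?mul0r //).
have [h0 h1 h2 h3] := core_C irr Dq' Hp' E'.
move=> x xs; have := st x xs; rewrite !inE => /orP[/eqP ex|/orP[/eqP ex|/orP[/eqP ex|/eqP ex]]].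
all: by move: h0 h1 h2 h3; rewrite /c' -ex xs; do ? [move=> -> | move=> _].
Qed.
Lemma oddD2 m n : odd (m + 2 * n) = odd m.
Proof. by rewrite oddD oddM /= addbF. Qed.
Lemma oddS2 m n : odd (m + 2 * n).+1 = ~~ odd m.
Proof. by rewrite oddS oddD2. Qed.

Lemma sum_pairs (F : nat -> algC) (a n : nat) :
  \sum_(a <= k < a + 2 * n) F k = \sum_(i < n) (F (a + 2 * i)%N + F (a + 2 * i).+1).
Proof.
elim: n => [|n IH]; first by rewrite muln0 addn0 big_geq // big_ord0.
rewrite big_ord_recr /= -IH.
have -> : (a + 2 * n.+1 = (a + 2 * n).+2)%N by lia.
rewrite big_nat_recr /=; last by lia.
rewrite big_nat_recr /=; last by lia.
by rewrite addrA.
Qed.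

Lemma sum_split (F : nat -> algC) (l m : nat) :
  \sum_(0 <= k < 2 + 2 * l + 2 * m) F k =
  F 0%N + F 1%N + \sum_(i < l) (F (2 + 2 * i)%N + F (2 + 2 * i).+1)
  + \sum_(i < m) (F (2 + 2 * l + 2 * i)%N + F (2 + 2 * l + 2 * i).+1).
Proof.
rewrite (big_cat_nat (n := 2 + 2 * l)) /=; [|lia|lia].
rewrite (big_cat_nat (n := 2)) /=; [|lia|lia].
by rewrite !sum_pairs big_nat_recr //= big_nat_recr //= big_geq // add0r.
Qed.

Lemma sum_delta (l p : nat) (G : nat -> algC) :
  (p < l)%N -> \sum_(i < l) G i * (i == p :> nat)%:R = G p.
Proof.
move=> hp; rewrite (bigD1 (Ordinal hp)) //= eqxx mulr1 big1 ?addr0 //.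
move=> i /eqP hi; have -> : (i == p :> nat) = false.
  by apply/negbTE/eqP => e; apply: hi; apply: val_inj.
by rewrite mulr0.
Qed.

Lemma qT_map (l m : nat) : map_poly ratr (qT l m) =
  'X^6 - ((l + m + 3)%:R : algC) *: 'X^4 + (l * m + l + m + 3)%:R *: 'X^2 - 1.
Proof.
have mq : forall c d : rat, map_poly ratr ('X^6 - c *: 'X^4 + d *: 'X^2 - 1 : {poly rat})
   = 'X^6 - (ratr c : algC) *: 'X^4 + ratr d *: 'X^2 - 1.
  by move=> c d; rewrite !(rmorphB, rmorphD) /= !map_polyZ !map_polyXn rmorph1.
by rewrite /qT mq !ratr_nat.
Qed.

Lemma eig_char (l m : nat) (a : algC) :
  eigenvalue (adjT l m) a -> a ^+ 2 = 1 \/ root (map_poly ratr (qT l m)) a.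
Proof.
case/eigenvalueP => v Ev nz.
pose w (k : nat) : algC := oapp (v 0) 0 (insub k : option 'I_(2 + 2 * l + 2 * m)).
have wv : forall i : 'I_(2 + 2 * l + 2 * m), w i = v 0 i by move=> i; rewrite /w valK.
pose ab (k j : nat) := tedge l m k j || tedge l m j k.
pose adj (k j : nat) : algC := (ab k j)%:R.
have EQ : forall j, (j < 2 + 2 * l + 2 * m)%N ->
    a * w j = \sum_(0 <= k < 2 + 2 * l + 2 * m) w k * adj k j.
  move=> j hj; have := congr1 (fun M : 'rV[algC]_(2 + 2 * l + 2 * m) => M 0 (Ordinal hj)) Ev.
  rewrite !mxE /= => e; rewrite (wv (Ordinal hj)) -e big_mkord.
  by apply: eq_bigr => k _; rewrite wv !mxE.
clearbody w.
pose P := \sum_(i < l) w (2 + 2 * i)%N.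
pose Q := \sum_(i < m) w (2 + 2 * l + 2 * i)%N.
have EB : forall p, (p < l)%N -> a * w (2 + 2 * p).+1 = w (2 + 2 * p)%N.
  move=> p hp; rewrite EQ; last by lia.
  rewrite sum_split /adj.
  have -> : ab 0%N (2 + 2 * p).+1 = false by rewrite /ab /tedge ?oddS2 ?oddD2 /=; lia.
  have -> : ab 1%N (2 + 2 * p).+1 = false by rewrite /ab /tedge ?oddS2 ?oddD2 /=; lia.
  rewrite (eq_bigr (fun i : 'I_l => w (2 + 2 * i)%N * (i == p :> nat)%:R)); last first.
    move=> i _; have hi := ltn_ord i.
    have -> : ab (2 + 2 * i)%N (2 + 2 * p).+1 = (i == p :> nat) by rewrite /ab /tedge ?oddS2 ?oddD2 /=; lia.
    have -> : ab (2 + 2 * i).+1 (2 + 2 * p).+1 = false by rewrite /ab /tedge ?oddS2 ?oddD2 /=; lia.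
    by rewrite mulr0 addr0.
  rewrite (sum_delta (fun i => w (2 + 2 * i)%N)) // big1 ?addr0 ?mulr0 ?add0r //.
  move=> i _; have hi := ltn_ord i.
  have -> : ab (2 + 2 * l + 2 * i)%N (2 + 2 * p).+1 = false by rewrite /ab /tedge ?oddS2 ?oddD2 /=; lia.
  have -> : ab (2 + 2 * l + 2 * i).+1 (2 + 2 * p).+1 = false by rewrite /ab /tedge ?oddS2 ?oddD2 /=; lia.
  by rewrite !mulr0 addr0.
have EA : forall p, (p < l)%N -> a * w (2 + 2 * p)%N = w 0%N + w (2 + 2 * p).+1.
  move=> p hp; rewrite EQ; last by lia.
  rewrite sum_split /adj.
  have -> : ab 0%N (2 + 2 * p)%N = true by rewrite /ab /tedge ?oddS2 ?oddD2 /=; lia.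
  have -> : ab 1%N (2 + 2 * p)%N = false by rewrite /ab /tedge ?oddS2 ?oddD2 /=; lia.
  rewrite (eq_bigr (fun i : 'I_l => w (2 + 2 * i).+1 * (i == p :> nat)%:R)); last first.
    move=> i _; have hi := ltn_ord i.
    have -> : ab (2 + 2 * i).+1 (2 + 2 * p)%N = (i == p :> nat) by rewrite /ab /tedge ?oddS2 ?oddD2 /=; lia.
    have -> : ab (2 + 2 * i)%N (2 + 2 * p)%N = false by rewrite /ab /tedge ?oddS2 ?oddD2 /=; lia.
    by rewrite mulr0 add0r.
  rewrite (sum_delta (fun i => w (2 + 2 * i).+1)) // big1 ?addr0 ?mulr0 ?mulr1 ?addr0 //.
  move=> i _; have hi := ltn_ord i.
  have -> : ab (2 + 2 * l + 2 * i)%N (2 + 2 * p)%N = false by rewrite /ab /tedge ?oddS2 ?oddD2 /=; lia.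
  have -> : ab (2 + 2 * l + 2 * i).+1 (2 + 2 * p)%N = false by rewrite /ab /tedge ?oddS2 ?oddD2 /=; lia.
  by rewrite !mulr0 addr0.
have ED : forall p, (p < m)%N -> a * w (2 + 2 * l + 2 * p).+1 = w (2 + 2 * l + 2 * p)%N.
  move=> p hp; rewrite EQ; last by lia.
  rewrite sum_split /adj.
  have -> : ab 0%N (2 + 2 * l + 2 * p).+1 = false by rewrite /ab /tedge ?oddS2 ?oddD2 /=; lia.
  have -> : ab 1%N (2 + 2 * l + 2 * p).+1 = false by rewrite /ab /tedge ?oddS2 ?oddD2 /=; lia.
  rewrite (eq_bigr (fun i : 'I_m => w (2 + 2 * l + 2 * i)%N * (i == p :> nat)%:R)); last first.
    move=> i _; have hi := ltn_ord i.
    have -> : ab (2 + 2 * l + 2 * i)%N (2 + 2 * l + 2 * p).+1 = (i == p :> nat) by rewrite /ab /tedge ?oddS2 ?oddD2 /=; lia.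
    have -> : ab (2 + 2 * l + 2 * i).+1 (2 + 2 * l + 2 * p).+1 = false by rewrite /ab /tedge ?oddS2 ?oddD2 /=; lia.
    by rewrite mulr0 addr0.
  rewrite (sum_delta (fun i => w (2 + 2 * l + 2 * i)%N)) // big1 ?addr0 ?mulr0 ?add0r //.
  move=> i _; have hi := ltn_ord i.
  have -> : ab (2 + 2 * i)%N (2 + 2 * l + 2 * p).+1 = false by rewrite /ab /tedge ?oddS2 ?oddD2 /=; lia.
  have -> : ab (2 + 2 * i).+1 (2 + 2 * l + 2 * p).+1 = false by rewrite /ab /tedge ?oddS2 ?oddD2 /=; lia.
  by rewrite !mulr0 addr0.
have EC : forall p, (p < m)%N -> a * w (2 + 2 * l + 2 * p)%N = w 1%N + w (2 + 2 * l + 2 * p).+1.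
  move=> p hp; rewrite EQ; last by lia.
  rewrite sum_split /adj.
  have -> : ab 0%N (2 + 2 * l + 2 * p)%N = false by rewrite /ab /tedge ?oddS2 ?oddD2 /=; lia.
  have -> : ab 1%N (2 + 2 * l + 2 * p)%N = true by rewrite /ab /tedge ?oddS2 ?oddD2 /=; lia.
  rewrite (eq_bigr (fun i : 'I_m => w (2 + 2 * l + 2 * i).+1 * (i == p :> nat)%:R)); last first.
    move=> i _; have hi := ltn_ord i.
    have -> : ab (2 + 2 * l + 2 * i).+1 (2 + 2 * l + 2 * p)%N = (i == p :> nat) by rewrite /ab /tedge ?oddS2 ?oddD2 /=; lia.
    have -> : ab (2 + 2 * l + 2 * i)%N (2 + 2 * l + 2 * p)%N = false by rewrite /ab /tedge ?oddS2 ?oddD2 /=; lia.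
    by rewrite mulr0 add0r.
  rewrite (sum_delta (fun i => w (2 + 2 * l + 2 * i).+1)) // big1 ?addr0 ?mulr0 ?mulr1 ?add0r //.
  move=> i _; have hi := ltn_ord i.
  have -> : ab (2 + 2 * i)%N (2 + 2 * l + 2 * p)%N = false by rewrite /ab /tedge ?oddS2 ?oddD2 /=; lia.
  have -> : ab (2 + 2 * i).+1 (2 + 2 * l + 2 * p)%N = false by rewrite /ab /tedge ?oddS2 ?oddD2 /=; lia.
  by rewrite !mulr0 addr0.
have E0 : a * w 0%N = w 1%N + P.
  rewrite EQ; last by lia.
  rewrite sum_split /adj.
  have -> : ab 0%N 0%N = false by rewrite /ab /tedge ?oddS2 ?oddD2 /=; lia.
  have -> : ab 1%N 0%N = true by rewrite /ab /tedge ?oddS2 ?oddD2 /=; lia.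
  rewrite [\sum_(i < m) _]big1; last first.
    move=> i _; have hi := ltn_ord i.
    have -> : ab (2 + 2 * l + 2 * i)%N 0%N = false by rewrite /ab /tedge ?oddS2 ?oddD2 /=; lia.
    have -> : ab (2 + 2 * l + 2 * i).+1 0%N = false by rewrite /ab /tedge ?oddS2 ?oddD2 /=; lia.
    by rewrite !mulr0 addr0.
  rewrite (eq_bigr (fun i : 'I_l => w (2 + 2 * i)%N)); last first.
    move=> i _; have hi := ltn_ord i.
    have -> : ab (2 + 2 * i)%N 0%N = true by rewrite /ab /tedge ?oddS2 ?oddD2 /=; lia.
    have -> : ab (2 + 2 * i).+1 0%N = false by rewrite /ab /tedge ?oddS2 ?oddD2 /=; lia.
    by rewrite mulr0 addr0 mulr1.
  by rewrite addr0 mulr0 mulr1 ?add0r ?addr0.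
have E1 : a * w 1%N = w 0%N + Q.
  rewrite EQ; last by lia.
  rewrite sum_split /adj.
  have -> : ab 0%N 1%N = true by rewrite /ab /tedge ?oddS2 ?oddD2 /=; lia.
  have -> : ab 1%N 1%N = false by rewrite /ab /tedge ?oddS2 ?oddD2 /=; lia.
  rewrite [\sum_(i < l) _]big1; last first.
    move=> i _; have hi := ltn_ord i.
    have -> : ab (2 + 2 * i)%N 1%N = false by rewrite /ab /tedge ?oddS2 ?oddD2 /=; lia.
    have -> : ab (2 + 2 * i).+1 1%N = false by rewrite /ab /tedge ?oddS2 ?oddD2 /=; lia.
    by rewrite !mulr0 addr0.
  rewrite (eq_bigr (fun i : 'I_m => w (2 + 2 * l + 2 * i)%N)); last first.
    move=> i _; have hi := ltn_ord i.
    have -> : ab (2 + 2 * l + 2 * i)%N 1%N = true by rewrite /ab /tedge ?oddS2 ?oddD2 /=; lia.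
    have -> : ab (2 + 2 * l + 2 * i).+1 1%N = false by rewrite /ab /tedge ?oddS2 ?oddD2 /=; lia.
    by rewrite mulr0 addr0 mulr1.
  by rewrite addr0 mulr0 mulr1 ?add0r ?addr0.
case: (boolP (a ^+ 2 == 1)) => [/eqP h|ha]; first by left.
right; apply: contraT => nr.
set t := a ^+ 2 - 1.
have tn : t != 0 by rewrite /t subr_eq0.
have TB : forall p, (p < l)%N -> t * w (2 + 2 * p).+1 = w 0%N.
  by move=> p hp; rewrite /t mulrBl mul1r expr2 -mulrA EB // EA // addrK.
have TA : forall p, (p < l)%N -> t * w (2 + 2 * p)%N = a * w 0%N.
  by move=> p hp; rewrite -EB // mulrCA TB.
have TD : forall p, (p < m)%N -> t * w (2 + 2 * l + 2 * p).+1 = w 1%N.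
  by move=> p hp; rewrite /t mulrBl mul1r expr2 -mulrA ED // EC // addrK.
have TC : forall p, (p < m)%N -> t * w (2 + 2 * l + 2 * p)%N = a * w 1%N.
  by move=> p hp; rewrite -ED // mulrCA TD.
have tP : t * P = a * w 0%N * l%:R.
  rewrite /P mulr_sumr (eq_bigr (fun _ => a * w 0%N)); last by move=> i _; exact: TA (ltn_ord i).
  by rewrite sumr_const card_ord mulr_natr.
have tQ : t * Q = a * w 1%N * m%:R.
  rewrite /Q mulr_sumr (eq_bigr (fun _ => a * w 1%N)); last by move=> i _; exact: TC (ltn_ord i).
  by rewrite sumr_const card_ord mulr_natr.
have X : a * (t - l%:R) * w 0%N = t * w 1%N.
  have e := congr1 (fun x => t * x) E0; rewrite /= mulrDr tP in e.
  have -> : a * (t - l%:R) * w 0%N = t * (a * w 0%N) - a * w 0%N * l%:R by ring.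
  by rewrite e; ring.
have Y : a * (t - m%:R) * w 1%N = t * w 0%N.
  have e := congr1 (fun x => t * x) E1; rewrite /= mulrDr tQ in e.
  have -> : a * (t - m%:R) * w 1%N = t * (a * w 1%N) - a * w 1%N * m%:R by ring.
  by rewrite e; ring.
set qa := a ^+ 2 * (t - l%:R) * (t - m%:R) - t ^+ 2.
have hq : (map_poly ratr (qT l m)).[a] = qa.
  rewrite qT_map !(hornerD, hornerN, hornerZ, hornerXn) -polyC1 hornerC /qa /t !natrD !natrM; ring.
have qn : qa != 0 by move: nr; rewrite /root hq.
have u0 : w 0%N = 0.
  apply: (mulfI qn); rewrite mulr0.
  have -> : qa * w 0%N = a * (t - m%:R) * (a * (t - l%:R) * w 0%N) - t * (t * w 0%N).
    by rewrite /qa; ring.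
  by rewrite X -Y; ring.
have u1 : w 1%N = 0.
  apply: (mulfI qn); rewrite mulr0.
  have -> : qa * w 1%N = a * (t - l%:R) * (a * (t - m%:R) * w 1%N) - t * (t * w 1%N).
    by rewrite /qa; ring.
  by rewrite Y -X; ring.
have B0 : forall p, (p < l)%N -> w (2 + 2 * p).+1 = 0.
  by move=> p hp; apply: (mulfI tn); rewrite TB // u0 mulr0.
have A0 : forall p, (p < l)%N -> w (2 + 2 * p)%N = 0.
  by move=> p hp; rewrite -EB // B0 // mulr0.
have D0 : forall p, (p < m)%N -> w (2 + 2 * l + 2 * p).+1 = 0.
  by move=> p hp; apply: (mulfI tn); rewrite TD // u1 mulr0.
have C0 : forall p, (p < m)%N -> w (2 + 2 * l + 2 * p)%N = 0.
  by move=> p hp; rewrite -ED // D0 // mulr0.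
suff v0 : v = 0 by rewrite v0 eqxx in nz.
apply/rowP => j; rewrite !mxE -wv.
have hj := ltn_ord j.
case: (ltnP j 2) => h2.
  by have [->|->] : (nat_of_ord j = 0 \/ nat_of_ord j = 1)%N by lia.
case: (ltnP j (2 + 2 * l)) => h3.
  have hp : ((j - 2) %/ 2 < l)%N by lia.
  have [->|->] : (nat_of_ord j = 2 + 2 * ((j - 2) %/ 2) \/ nat_of_ord j = (2 + 2 * ((j - 2) %/ 2)).+1)%N by lia.
    exact: A0.
  exact: B0.
have hp : ((j - 2 - 2 * l) %/ 2 < m)%N by lia.
have [->|->] : (nat_of_ord j = 2 + 2 * l + 2 * ((j - 2 - 2 * l) %/ 2) \/
    nat_of_ord j = (2 + 2 * l + 2 * ((j - 2 - 2 * l) %/ 2)).+1)%N by lia.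
  exact: C0.
exact: D0.
Qed.

Unset Implicit Arguments.

Theorem corollary2p6 (l m : nat) :
  irreducible_poly (qT l m) ->
  Qlin_indep [pred a : algC | (0 < a) && eigenvalue (adjT l m) a] /\
  Qlin_indep [pred a : algC | (a < 0) && eigenvalue (adjT l m) a].
Proof.
move=> irr.
have [b1 [b2 [b3 [Dq Hp]]]] := qT_factor l m.
split.
- move=> s c us /allP alls E x xs.
  apply: (indep_pos irr Dq Hp us _ E xs) => y ys.
  have /andP[yp ye] := alls y ys.
  by split => //; exact: eig_char ye.
- move=> s c us /allP alls E x xs.
  pose c' := fun y : algC => c (- y).
  have us' : uniq (map -%R s) by rewrite map_inj_uniq //; exact: oppr_inj.
  have E' : \sum_(y <- map -%R s) ratr (c' y) * y = 0.
    rewrite big_map /c'.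
    under eq_bigr => y _ do rewrite opprK mulrN.
    by rewrite sumrN E oppr0.
  have H' : forall y, y \in map -%R s ->
      0 < y /\ (y ^+ 2 = 1 \/ root (map_poly ratr (qT l m)) y).
    move=> y /mapP[z zs ->]; have /andP[zn ze] := alls z zs.
    split; first by rewrite oppr_gt0.
    rewrite sqrrN; case: (eig_char ze) => [->|r]; [by left|right].
    move: r; rewrite Dq !root_prod_XsubC !inE !eqr_oppLR !opprK.
    move: (z == b1) (z == - b1) (z == b2) (z == - b2) (z == b3) (z == - b3).
    by do 6! case.
  have := indep_pos irr Dq Hp us' H' E' (map_f -%R xs).
  by rewrite /c' opprK.
Qed.
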